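(* Let $G=(V,E)$ be a finite simple connected graph, $t\ge 0$ an integer, $r\ge 0$ an integer, and $\Phi\subseteq\Phi^{(t)}_{\mathrm{all}}$ a set of failure patterns. Then consensus in $G$ can be solved by an oblivious algorithm running in $r$ rounds under the $t$-resilient model with failure patterns in $\Phi$ (i.e. for every input assignment and every failure pattern in $\Phi$) if and only if every connected component of the information flow graph $\mathsf{IF}(G,r,\Phi)$ has a dominating node in $V$.
   Context: Model. $G=(V,E)$ is a finite simple connected undirected graph whose nodes carry distinct identifiers; $N(v)$ is the neighbourhood of $v$. Computation proceeds in synchronous rounds; in each round every node sends a message to each neighbour, receives its neighbours' messages, and computes. Nodes know $G$ and $t$. Failure patterns. A failure pattern is a set $\varphi=\{(v,F_v,f_v): v\in F\}$ with $F\subseteq V$, $|F|\le t$, and for each $v\in F$ an integer $f_v\ge1$ and a nonempty $F_v\subseteq N(v)$: $v$ acts normally in rounds $1,\dots,f_v-1$, in round $f_v$ its messages reach exactly $N(v)\setminus F_v$, and afterwards it sends nothing. Nodes in $F$ are faulty, the others correct. $\Phi^{(t)}_{\mathrm{all}}$ denotes the set of all failure patterns with at most $t$ faulty nodes. Causal paths. A causal path w.r.t. $\varphi$ from $v$ to $v'$ is a sequence $u_1=v,\dots,u_q=v'$ with $u_{i+1}\in N(u_i)$, such that for each $i<q$, $u_i$ has not crashed during rounds $1,\dots,i-1$, and if $(u_i,F_{u_i},i)\in\varphi$ then $u_{i+1}\notin F_{u_i}$; its length is $q-1$. Views. Each node $u$ has input $x_u$; in flooding every node sends $(u,x_u)$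 in round 1 and forwards all known pairs in later rounds. $\mathrm{view}(v,r,\varphi)$ is the set of pairs $(u,x_u)$ known to $v$ after $r$ rounds under $\varphi$; $(u,x_u)\in\mathrm{view}(v,r,\varphi)$ iff $u=v$ or some causal path w.r.t. $\varphi$ from $u$ to $v$ has length at most $r$. Views are identified through the set of nodes $u$ whose pair they contain (this set depends only on $G,\varphi,r$), so the graph below does not depend on inputs. Oblivious algorithms and consensus. An oblivious algorithm running in $r$ rounds floods for $r$ rounds, then each correct node $v$ outputs a value depending only on $v$ and $\mathrm{view}(v,r,\varphi)$. Consensus: inputs come from a set $I$ with $|I|\ge2$; every correct node outputs a value in $I$, all correct nodes output the same value, and every output equals some node's input. Information flow graph. $\mathsf{IF}(G,r,\Phi)$ is the undirected graph whose vertices are all pairs $(v,\mathrm{view}(v,r,\varphi))$ with $\varphi\in\Phi$ and $v$ correct in $\varphi$ (two such pairs are the same vertex if the node and the view coincide), with an edge between $(v_1,w_1)$ and $(v_2,w_2)$ whenever there exists $\varphi\in\Phi$ with $w_1=\mathrm{view}(v_1,r,\varphi)$ and $w_2=\mathrm{view}(v_2,r,\varphi)$. Domination. A node $v\in V$ dominates a connected component $C$ of $\mathsf{IF}(G,r,\Phi)$ if for every $\varphi\in\Phi$ and every $u\in V$ with $(u,\mathrm{view}(u,r,\varphi))\in C$ we have $(v,x_v)\in\mathrm{view}(u,r,\varphi)$ ($v$ itself need not be correct). *)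

(* Defs.v *)
From Stdlib Require Import Relations.
From mathcomp Require Import all_boot.

Set Implicit Arguments.
Unset Strict Implicit.
Unset Printing Implicit Defensive.

Definition simple_graph (T : finType) (e : rel T) : Prop :=
  symmetric e /\ irreflexive e.

Definition connected_graph (T : finType) (e : rel T) : Prop :=
  forall x y : T, connect e x y.

Definition nbhd (T : finType) (e : rel T) (v : T) : {set T} := [set w | e v w].

(* A failure pattern phi = {(v, F_v, f_v) : v in F} is represented as the map
   v |-> Some (F_v, f_v) if v in F (v faulty), None if v is correct. *)
Definition fpattern (T : finType) := T -> option ({set T} * nat).

Definition faulty (T : finType) (phi : fpattern T) (v : T) : bool := phi v.
Definition correct (T : finType) (phi : fpattern T) (v : T) : bool := ~~ phi v.

Definition valid_fpattern (T : finType) (e : rel T) (t : nat) (phi : fpattern T) : Prop :=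
  #|[set v | faulty phi v]| <= t /\
  forall v (F : {set T}) (f : nat), phi v = Some (F, f) ->
    [/\ 1 <= f, F != set0 & F \subset nbhd e v].

(* Condition for the i-th node x of a causal path (i counted from 1, i.e.
   x = u_i, sending in round i) to pass its message to the next node y:
   x has not crashed during rounds 1..i-1, and if (x,F_x,i) is in phi then
   y is not in F_x. *)
Definition hop_ok (T : finType) (phi : fpattern T) (i : nat) (x y : T) : bool :=
  match phi x with
  | None => true
  | Some (F, f) => (i < f) || ((i == f) && (y \notin F))
  end.

(* The sequence u :: p (u_1 = u, ..., u_q = last u p) is a causal path
   w.r.t. phi from u to v; its length is size p. *)
Definition causal_path (T : finType) (e : rel T) (phi : fpattern T)
    (u v : T) (p : seq T) : bool :=
  [&& path e u p, last u p == v &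
      all (fun i => hop_ok phi i.+1 (nth u (u :: p) i) (nth u p i))
          (iota 0 (size p))].

(* The set of nodes u whose pair (u, x_u) is in view(v, r, phi). *)
Definition view (T : finType) (e : rel T) (r : nat) (phi : fpattern T) (v : T)
    : {set T} :=
  [set u | (u == v) ||
     [exists k : 'I_r.+1, exists p : k.-tuple T, causal_path e phi u v p]].

(* The view with the inputs: the set of pairs (u, x_u), encoded as the
   partial function u |-> Some x_u if (u,x_u) is in the view, None otherwise. *)
Definition view_inputs (T : finType) (e : rel T) (r : nat) (phi : fpattern T)
    (I : Type) (x : T -> I) (v : T) : {ffun T -> option I} :=
  [ffun u => if u \in view e r phi v then Some (x u) else None].

(* An oblivious algorithm running in r rounds is a decision map
   dec : node -> view (set of pairs) -> output. *)
Definition oblivious_consensus (T : finType) (e : rel T) (r : nat)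
    (Phi : fpattern T -> Prop) (I : Type)
    (dec : T -> {ffun T -> option I} -> I) : Prop :=
  forall (x : T -> I) (phi : fpattern T), Phi phi ->
    (forall v w, correct phi v -> correct phi w ->
       dec v (view_inputs e r phi x v) = dec w (view_inputs e r phi x w)) /\
    (forall v, correct phi v -> exists u, dec v (view_inputs e r phi x v) = x u).

Definition consensus_solvable_oblivious (T : finType) (e : rel T) (r : nat)
    (Phi : fpattern T -> Prop) (I : Type) : Prop :=
  exists dec : T -> {ffun T -> option I} -> I, oblivious_consensus e r Phi dec.

(* Information flow graph IF(G, r, Phi): vertices are pairs (v, W). *)
Definition IF_vertex (T : finType) (e : rel T) (r : nat)
    (Phi : fpattern T -> Prop) (a : T * {set T}) : Prop :=
  exists phi, Phi phi /\ correct phi a.1 /\ a.2 = view e r phi a.1.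

Definition IF_edge (T : finType) (e : rel T) (r : nat)
    (Phi : fpattern T -> Prop) (a b : T * {set T}) : Prop :=
  exists phi, [/\ Phi phi, correct phi a.1, correct phi b.1,
                  a.2 = view e r phi a.1 & b.2 = view e r phi b.1].

Definition IF_connected (T : finType) (e : rel T) (r : nat)
    (Phi : fpattern T -> Prop) : relation (T * {set T}) :=
  clos_refl_trans _ (IF_edge e r Phi).

Definition dominates (T : finType) (e : rel T) (r : nat)
    (Phi : fpattern T -> Prop) (v : T) (a : T * {set T}) : Prop :=
  forall (phi : fpattern T) (u : T), Phi phi ->
    IF_connected e r Phi a (u, view e r phi u) ->
    v \in view e r phi u.

Definition every_component_dominated (T : finType) (e : rel T) (r : nat)
    (Phi : fpattern T -> Prop) : Prop :=
  forall a, IF_vertex e r Phi a -> exists v : T, dominates e r Phi v a.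

(* Main.v *)
Require Import Defs.
From Stdlib Require Import Relations.
From mathcomp Require Import all_boot.
From Stdlib Require Import Classical ClassicalEpsilon.

Set Implicit Arguments.
Unset Strict Implicit.
Unset Printing Implicit Defensive.

Section Aux.
Variables (T : finType) (e : rel T) (r : nat) (Phi : fpattern T -> Prop).

Definition vi (I : Type) (x : T -> I) (S : {set T}) : {ffun T -> option I} :=
  [ffun u => if u \in S then Some (x u) else None].

Lemma IF_edge_sym a b : IF_edge e r Phi a b -> IF_edge e r Phi b a.
Proof. by case=> phi [H1 H2 H3 H4 H5]; exists phi; split. Qed.

Lemma IF_conn_sym a b : IF_connected e r Phi a b -> IF_connected e r Phi b a.
Proof.
elim=> [x y /IF_edge_sym H|x|x y z _ H1 _ H2].
- exact: rt_step.
- exact: rt_refl.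
- exact: rt_trans H2 H1.
Qed.

Lemma dom_conn v a b : IF_connected e r Phi a b ->
  dominates e r Phi v a -> dominates e r Phi v b.
Proof.
move=> Hab Hd phi u Hphi Hbc; apply: Hd => //; exact: rt_trans Hab Hbc.
Qed.

End Aux.

Theorem theorem3 (T : finType) (e : rel T) (t r : nat)
    (Phi : fpattern T -> Prop) (I : Type) :
  simple_graph e -> connected_graph e ->
  (forall phi, Phi phi -> valid_fpattern e t phi) ->
  (exists a b : I, a <> b) ->
  consensus_solvable_oblivious e r Phi I <-> every_component_dominated e r Phi.
Proof.
move=> _ _ _ [Ia [Ib Hab]]; split.
- case=> dec Hdec a Hva.
  apply: NNPP => Hn.
  have Hnd : forall v, exists phi u, [/\ Phi phi,
      IF_connected e r Phi a (u, view e r phi u) & v \notin view e r phi u].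
    move=> v; apply: NNPP => H1; apply: Hn; exists v => phi u Hphi Hc.
    apply: NNPP => H2; apply: H1; exists phi, u; split => //; exact/negP.
  pose g (x : T -> I) (c : T * {set T}) := dec c.1 (vi x c.2).
  have Hconst : forall x c d, IF_connected e r Phi c d -> g x c = g x d.
    move=> x c d; elim=> [[c1 c2] [d1 d2] [phi [Hp Hc Hd /= -> ->]]|c0|c0 d0 f0 _ H1 _ H2].
    + exact: (proj1 (Hdec x phi Hp)).
    + by [].
    + by rewrite H1.
  have Hext : forall x y c, x =1 y -> g x c = g y c.
    move=> x y c Hxy; rewrite /g; congr (dec _ _); apply/ffunP => u.
    by rewrite !ffunE Hxy.
  have Hstep : forall x y v, (forall u, u != v -> x u = y u) -> g x a = g y a.
    move=> x y v Hxy; have [phi [u [Hp Hc Hv]]] := Hnd v.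
    rewrite (Hconst x _ _ Hc) (Hconst y _ _ Hc) /g /=; congr (dec _ _).
    apply/ffunP => w; rewrite !ffunE; case: ifP => // Hw.
    rewrite Hxy //; apply/eqP => Ew; move: Hv; by rewrite -Ew Hw.
  have Hval : forall k, g (fun _ => k) a = k.
    move=> k; case: Hva => phi [Hp [Hc E]].
    have [u Hu] := proj2 (Hdec (fun _ => k) phi Hp) a.1 Hc.
    by rewrite /g E; exact: Hu.
  have Hind : forall s : seq T, g (fun u => if u \in s then Ib else Ia) a = Ia.
    elim=> [|v s IH].
      by rewrite -[RHS](Hval Ia); apply: Hext => u.
    rewrite -[RHS]IH; apply: (Hstep _ _ v) => u Hu.
    by rewrite in_cons (negbTE Hu).
  apply: Hab; rewrite -[LHS](Hind (enum T)) -[RHS](Hval Ib); apply: Hext => u.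
  by rewrite mem_enum.
- move=> Hdom.
  pose D (a : T * {set T}) (v : T) : bool :=
    if excluded_middle_informative (dominates e r Phi v a) then true else false.
  pose dec (v : T) (W : {ffun T -> option I}) : I :=
    match [pick d | D (v, [set u | W u]) d] with
    | Some d => match W d with Some i => i | None => Ia end
    | None => Ia end.
  exists dec => x phi Hphi.
  have HS : forall v, [set u | view_inputs e r phi x v u] = view e r phi v.
    move=> v; apply/setP => u; rewrite inE /view_inputs ffunE.
    by case: (u \in view e r phi v).
  have Hout : forall v, correct phi v -> exists d,
      [/\ [pick d | D (v, view e r phi v) d] = Some d,
          d \in view e r phi v & dec v (view_inputs e r phi x v) = x d].
    move=> v Hv.
    have Hva : IF_vertex e r Phi (v, view e r phi v) by exists phi.
    have [d0 Hd0] := Hdom _ Hva.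
    have [d Hd Hpick] : exists2 d, D (v, view e r phi v) d &
        [pick d | D (v, view e r phi v) d] = Some d.
      case: pickP => [d Hd|H0]; first by exists d.
      by move: (H0 d0); rewrite /D; case: excluded_middle_informative.
    have Hdd : dominates e r Phi d (v, view e r phi v).
      by move: Hd; rewrite /D; case: excluded_middle_informative.
    have Hin : d \in view e r phi v by apply: Hdd => //; exact: rt_refl.
    exists d; split => //.
    by rewrite /dec HS Hpick /view_inputs ffunE Hin.
  split.
  + move=> v w Hv Hw.
    have [d [Hp1 Hi1 ->]] := Hout v Hv.
    have [d' [Hp2 Hi2 ->]] := Hout w Hw.
    suff -> : d = d' by [].
    have Hc : IF_connected e r Phi (v, view e r phi v) (w, view e r phi w).
      by apply: rt_step; exists phi.
    have Hc' := IF_conn_sym Hc.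
    have : [pick d | D (v, view e r phi v) d] = [pick d | D (w, view e r phi w) d].
      apply: eq_pick => z; rewrite /D.
      case: excluded_middle_informative => H1; case: excluded_middle_informative => H2 //.
      * by case: H2; exact: dom_conn H1.
      * by case: H1; exact: dom_conn H2.
    by rewrite Hp1 Hp2 => -[].
  + move=> v Hv; have [d [_ _ ->]] := Hout v Hv; by exists d.
Qed.
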